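(* Let $\Gamma$ be the first Grigorchuk group with generators $a,b,c,d$, acting on the right on $\{0,1\}^{\mathbb N}$, and let $\rho=111\cdots$. For a word $w=w_1\cdots w_n$ over $\{a,b,c,d\}$ set $\delta(w)=\#\{\rho\,w_{i+1}\cdots w_n: i=0,\dots,n\}$. Let $\eta$ be the real root of $t^3+t^2+t-2$ and $\alpha=\log 2/\log(2/\eta)$. There exist constants $C_1,C_2>0$ such that for every positive integer $\ell$: (1) every word $w$ over $\{a,b,c,d\}$ of length $\ell$ satisfies $\delta(w)\le C_1\ell^\alpha$; (2) there exists a word $w$ over $\{a,b,c,d\}$ of length $\ell$ with $\delta(w)\ge C_2\ell^\alpha$.
   Context: The first Grigorchuk group $\Gamma$ is the group of permutations of $\{0,1\}^{\mathbb N}$ (acting on the right) generated by $a,b,c,d$, defined recursively for $x\in\{0,1\}$ and infinite binary sequences $u$ by: $(xu)a=(1-x)u$; $(0u)b=0(ua)$, $(1u)b=1(uc)$; $(0u)c=0(ua)$, $(1u)c=1(ud)$; $(0u)d=0u$, $(1u)d=1(ub)$. *)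

(* Defs.v *)
From Stdlib Require Import Reals List Arith ClassicalEpsilon.
Import ListNotations.

Inductive letter := La | Lb | Lc | Ld.

(* Infinite binary sequences {0,1}^N, with 1 = true. *)
Definition bseq := nat -> bool.

Definition shift (u : bseq) : bseq := fun k => u (S k).

(* act_bit g u k = the k-th bit of (u)g, following the recursive definition
   (xu)a=(1-x)u; (0u)b=0(ua), (1u)b=1(uc); (0u)c=0(ua), (1u)c=1(ud);
   (0u)d=0u, (1u)d=1(ub). *)
Fixpoint act_bit (g : letter) (u : bseq) (k : nat) {struct k} : bool :=
  match k with
  | O => match g with La => negb (u O) | _ => u O end
  | S k' =>
    match g with
    | La => u (S k')
    | Lb => if u O then act_bit Lc (shift u) k' else act_bit La (shift u) k'
    | Lc => if u O then act_bit Ld (shift u) k' else act_bit La (shift u) k'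
    | Ld => if u O then act_bit Lb (shift u) k' else u (S k')
    end
  end.

Definition act (u : bseq) (g : letter) : bseq := fun k => act_bit g u k.

Definition act_word (u : bseq) (w : list letter) : bseq := fold_left act w u.

Definition rho : bseq := fun _ => true.

Definition orbit_points (w : list letter) : list bseq :=
  map (fun i => act_word rho (skipn i w)) (seq 0 (S (length w))).

Definition seq_in (x : bseq) (l : list bseq) : Prop :=
  exists y, In y l /\ forall k, x k = y k.

Fixpoint ndistinct (l : list bseq) : nat :=
  match l with
  | [] => O
  | x :: l' =>
    (if excluded_middle_informative (seq_in x l') then O else 1%nat)
    + ndistinct l'
  end.

Definition delta (w : list letter) : nat := ndistinct (orbit_points w).

(* Main.v *)
Require Import Defs.
From Stdlib Require Import Reals List.
From Stdlib Require Import Arith Lia Lra Psatz Bool FunctionalExtensionality ClassicalEpsilon.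
Import ListNotations.

Lemma act_app u w1 w2 : act_word u (w1 ++ w2) = act_word (act_word u w1) w2.
Proof. unfold act_word. now rewrite fold_left_app. Qed.

Lemma act_cons u g w : act_word u (g :: w) = act_word (act u g) w.
Proof. reflexivity. Qed.

Definition E (g : letter) (s : bool) : list letter :=
  match g, s with
  | Lb, true => [Lc] | Lb, false => [La]
  | Lc, true => [Ld] | Lc, false => [La]
  | Ld, true => [Lb] | Ld, false => []
  | La, _ => []
  end.

Definition nst (g : letter) (s : bool) : bool :=
  match g with La => negb s | _ => s end.

Fixpoint sec (s : bool) (w : list letter) : list letter :=
  match w with
  | [] => []
  | g :: w' => E g s ++ sec (nst g s) w'
  end.

Fixpoint cntA (w : list letter) : nat :=
  match w with
  | [] => 0
  | La :: w' => S (cntA w')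
  | _ :: w' => cntA w'
  end.

Definition par (w : list letter) : bool := Nat.odd (cntA w).

Lemma cntA_app w1 w2 : cntA (w1 ++ w2) = cntA w1 + cntA w2.
Proof. induction w1 as [|g w1 IH]; simpl; auto. destruct g; simpl; lia. Qed.

Lemma shift_act u g : shift (act u g) = act_word (shift u) (E g (u 0)).
Proof.
  apply functional_extensionality; intro k. unfold shift, act.
  destruct g; simpl; destruct (u 0); reflexivity.
Qed.

Lemma act0 u g : act u g 0 = nst g (u 0).
Proof. unfold act. destruct g; reflexivity. Qed.

Lemma L1 w : forall u, act_word u w 0 = xorb (par w) (u 0) /\
  shift (act_word u w) = act_word (shift u) (sec (u 0) w).
Proof.
  induction w as [|g w IH]; intro u.
  - simpl. split; reflexivity.
  - rewrite act_cons. destruct (IH (act u g)) as [H0 H1]. split.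
    + rewrite H0, act0. unfold par. destruct g; simpl; auto.
      rewrite Nat.odd_succ, <- Nat.negb_odd. destruct (Nat.odd (cntA w)), (u 0); reflexivity.
    + rewrite H1, shift_act, act0. simpl. rewrite act_app. reflexivity.
Qed.

Lemma sec_app s w1 w2 : sec s (w1 ++ w2) = sec s w1 ++ sec (xorb (par w1) s) w2.
Proof.
  revert s; induction w1 as [|g w1 IH]; intro s; simpl.
  - reflexivity.
  - rewrite IH, app_assoc. f_equal. f_equal. unfold par. destruct g; simpl; auto.
    rewrite Nat.odd_succ, <- Nat.negb_odd. destruct (Nat.odd (cntA w1)), s; reflexivity.
Qed.

Definition consbit (b : bool) (x : bseq) : bseq :=
  fun k => match k with O => b | S k => x k end.

Lemma point_decomp u w : act_word u w = consbit (xorb (par w) (u 0)) (act_word (shift u) (sec (u 0) w)).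
Proof.
  destruct (L1 w u) as [H0 H1]. apply functional_extensionality; intros [|k]; simpl.
  - exact H0.
  - rewrite <- H1. reflexivity.
Qed.

Lemma shift_rho : shift rho = rho.
Proof. reflexivity. Qed.

Lemma point_rho w : act_word rho w = consbit (negb (par w)) (act_word rho (sec true w)).
Proof. rewrite point_decomp. unfold rho at 1. rewrite xorb_true_r. reflexivity. Qed.

Definition weq (w1 w2 : list letter) := forall u, act_word u w1 = act_word u w2.
Definition weqk (n : nat) (w1 w2 : list letter) := forall u k, k < n -> act_word u w1 k = act_word u w2 k.

Lemma weqk_sec n w1 w2 : par w1 = par w2 -> (forall s, weqk n (sec s w1) (sec s w2)) -> weqk (S n) w1 w2.
Proof.
  intros Hp Hs u [|k] Hk.
  - destruct (L1 w1 u) as [A _]. destruct (L1 w2 u) as [B _]. rewrite A, B, Hp. reflexivity.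
  - destruct (L1 w1 u) as [_ A]. destruct (L1 w2 u) as [_ B].
    change (act_word u w1 (S k)) with (shift (act_word u w1) k).
    change (act_word u w2 (S k)) with (shift (act_word u w2) k).
    rewrite A, B. apply Hs. lia.
Qed.

Lemma weq_of_weqk w1 w2 : (forall n, weqk n w1 w2) -> weq w1 w2.
Proof. intros H u. apply functional_extensionality; intro k. apply (H (S k)); lia. Qed.

Lemma weq_aa : weq [La; La] [].
Proof.
  intro u. apply functional_extensionality; intros [|k]; unfold act_word; simpl; unfold act; simpl.
  - apply negb_involutive.
  - reflexivity.
Qed.

Lemma weq_pre p w1 w2 : weq w1 w2 -> weq (p ++ w1) (p ++ w2).
Proof. intros H u. rewrite !act_app. apply H. Qed.
Lemma weq_suf p w1 w2 : weq w1 w2 -> weq (w1 ++ p) (w2 ++ p).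
Proof. intros H u. rewrite !act_app, H. reflexivity. Qed.
Lemma weq_trans a b c : weq a b -> weq b c -> weq a c.
Proof. intros H1 H2 u. rewrite H1. apply H2. Qed.
Lemma weq_sym a b : weq a b -> weq b a.
Proof. intros H u. symmetry. apply H. Qed.

Inductive v4 := Ve | Vb | Vc | Vd.
Definition lett (v : v4) : list letter :=
  match v with Ve => [] | Vb => [Lb] | Vc => [Lc] | Vd => [Ld] end.
Definition tov (g : letter) : v4 :=
  match g with La => Ve | Lb => Vb | Lc => Vc | Ld => Vd end.
Definition vmul (x y : v4) : v4 :=
  match x, y with
  | Ve, y => y | x, Ve => x
  | Vb, Vb => Ve | Vc, Vc => Ve | Vd, Vd => Ve
  | Vb, Vc => Vd | Vc, Vb => Vd
  | Vb, Vd => Vc | Vd, Vb => Vc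
  | Vc, Vd => Vb | Vd, Vc => Vb
  end.
Definition hv (x : v4) : v4 :=
  match x with Ve => Ve | Vb => Vc | Vc => Vd | Vd => Vb end.

Lemma sec_lett s v : sec s (lett v) =
  if s then lett (hv v) else match v with Vb | Vc => [La] | _ => [] end.
Proof. destruct v, s; reflexivity. Qed.

Lemma par_lett v : par (lett v) = false.
Proof. destruct v; reflexivity. Qed.

Lemma weq_v4 x y : weq (lett x ++ lett y) (lett (vmul x y)).
Proof.
  apply weq_of_weqk. intro n. revert x y. induction n as [|n IH]; intros x y.
  - intros u k Hk. lia.
  - apply weqk_sec.
    + unfold par. rewrite cntA_app. destruct x, y; reflexivity.
    + intro s. rewrite sec_app, par_lett, xorb_false_l, !sec_lett.
      destruct s.
      * replace (hv (vmul x y)) with (vmul (hv x) (hv y)) by (destruct x, y; reflexivity).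
        apply IH.
      * intros u k Hk. destruct x, y; simpl; try reflexivity;
        change (act (act u La) La) with (act_word u [La; La]); rewrite (weq_aa u); reflexivity.
Qed.

Lemma weq_gg g : weq [g; g] [].
Proof.
  destruct g.
  - apply weq_aa.
  - apply (weq_v4 Vb Vb).
  - apply (weq_v4 Vc Vc).
  - apply (weq_v4 Vd Vd).
Qed.

Lemma act_inv x R : act_word (act_word x R) (rev R) = x.
Proof.
  revert x; induction R as [|g R IH]; intro x; simpl. reflexivity.
  rewrite act_app, IH. change (act (act x g) g = x).
  change (act_word x [g; g] = act_word x []). apply weq_gg.
Qed.

Lemma act_word_inj R x y : act_word x R = act_word y R -> x = y.
Proof. intro H. rewrite <- (act_inv x R), <- (act_inv y R), H. reflexivity. Qed.

Lemma rho_fix_bit : forall k g, g <> La -> act_bit g rho k = true.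
Proof.
  induction k as [|k IH]; intros g Hg; destruct g; simpl; try reflexivity; try congruence;
  apply IH; discriminate.
Qed.

Lemma rho_lett v : act_word rho (lett v) = rho.
Proof.
  destruct v; simpl; try reflexivity; unfold act_word; simpl;
  apply functional_extensionality; intro k; unfold act; apply rho_fix_bit; discriminate.
Qed.

Fixpoint nfp (w : list letter) : v4 * list v4 :=
  match w with
  | [] => (Ve, [])
  | La :: w' => let (v, N) := nfp w' in (Ve, v :: N)
  | g :: w' => let (v, N) := nfp w' in (vmul (tov g) v, N)
  end.
Definition nf w := snd (nfp w).

Definition realize (N : list v4) : list letter := flat_map (fun v => La :: lett v) N.

Lemma realize_app N1 N2 : realize (N1 ++ N2) = realize N1 ++ realize N2.
Proof. unfold realize. apply flat_map_app. Qed.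

Lemma nfp_weq w : weq w (lett (fst (nfp w)) ++ realize (snd (nfp w))).
Proof.
  induction w as [|g w IH]; simpl. intro u; reflexivity.
  destruct (nfp w) as [v N] eqn:Hn. simpl in IH.
  destruct g; simpl.
  - change (La :: w) with ([La] ++ w). apply (weq_pre [La]) in IH. exact IH.
  - change (Lb :: w) with (lett Vb ++ w). eapply weq_trans. apply weq_pre, IH.
    rewrite app_assoc. apply weq_suf, weq_v4.
  - change (Lc :: w) with (lett Vc ++ w). eapply weq_trans. apply weq_pre, IH.
    rewrite app_assoc. apply weq_suf, weq_v4.
  - change (Ld :: w) with (lett Vd ++ w). eapply weq_trans. apply weq_pre, IH.
    rewrite app_assoc. apply weq_suf, weq_v4.
Qed.

Lemma rho_nf w : act_word rho w = act_word rho (realize (nf w)).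
Proof. rewrite (nfp_weq w rho), act_app, rho_lett. reflexivity. Qed.

Lemma nf_skipn : forall w j, exists k, nf (skipn j w) = skipn k (nf w).
Proof.
  induction w as [|g w IH]; intros j.
  - exists 0. destruct j; reflexivity.
  - destruct j as [|j]. exists 0. reflexivity.
    simpl skipn. destruct (IH j) as [k Hk]. rewrite Hk. unfold nf; simpl.
    destruct (nfp w) as [v N]. destruct g; simpl; [exists (S k) | exists k..]; reflexivity.
Qed.

Lemma nf_app L1 L2 : skipn (cntA L1) (nf (L1 ++ L2)) = nf L2.
Proof.
  induction L1 as [|g L1 IH]; simpl. reflexivity.
  unfold nf in *; simpl. destruct (nfp (L1 ++ L2)) as [v N]. destruct g; simpl; apply IH.
Qed.

Lemma nf_len w : length (nf w) = cntA w.
Proof.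
  induction w as [|g w IH]; unfold nf in *; simpl. reflexivity.
  destruct (nfp w) as [v N]. destruct g; simpl in *; lia.
Qed.

Lemma nfp_lett v R : nfp (lett v ++ R) = (vmul v (fst (nfp R)), snd (nfp R)).
Proof. destruct v; simpl; destruct (nfp R); simpl; reflexivity. Qed.
Lemma nfp_La R : nfp (La :: R) = (Ve, fst (nfp R) :: snd (nfp R)).
Proof. simpl. destruct (nfp R); reflexivity. Qed.

Lemma cntA_realize N : cntA (realize N) = length N.
Proof. induction N as [|v N IH]; simpl. reflexivity. rewrite cntA_app, IH. destruct v; reflexivity. Qed.

Lemma cntA_lett v : cntA (lett v) = 0.
Proof. destruct v; reflexivity. Qed.

Lemma realize_cons v N : realize (v :: N) = La :: lett v ++ realize N.
Proof. reflexivity. Qed.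

Lemma sec_realize_cons s v N : sec s (realize (v :: N)) = sec (negb s) (lett v) ++ sec (negb s) (realize N).
Proof.
  rewrite realize_cons. simpl. rewrite sec_app, par_lett. reflexivity.
Qed.

Definition deq (x y : bseq) : {x = y} + {x <> y} := excluded_middle_informative (x = y).

Lemma seq_in_In x l : seq_in x l <-> In x l.
Proof.
  split.
  - intros [y [Hy Hxy]]. replace x with y; auto. apply functional_extensionality; intro; auto.
  - intro H. exists x. auto.
Qed.

Lemma nd_nodup l : ndistinct l = length (nodup deq l).
Proof.
  induction l as [|x l IH]; simpl. reflexivity.
  destruct (excluded_middle_informative (seq_in x l)) as [H|H];
  destruct (in_dec deq x l) as [H'|H']; simpl; rewrite ?IH; try reflexivity.
  - exfalso; apply H'; apply seq_in_In; auto.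
  - exfalso; apply H; apply seq_in_In; auto.
Qed.

Lemma nd_incl l m : incl l m -> ndistinct l <= ndistinct m.
Proof.
  intro H. rewrite !nd_nodup. apply NoDup_incl_length. apply NoDup_nodup.
  intros x Hx. apply nodup_In. apply nodup_In in Hx. auto.
Qed.

Lemma nd_le_length l : ndistinct l <= length l.
Proof.
  rewrite nd_nodup. apply NoDup_incl_length. apply NoDup_nodup.
  intros x Hx. apply nodup_In in Hx. auto.
Qed.

Lemma nd_ge m l : NoDup m -> incl m l -> length m <= ndistinct l.
Proof.
  intros Hm H. rewrite nd_nodup. apply NoDup_incl_length; auto.
  intros x Hx. apply nodup_In. auto.
Qed.

Lemma nd_app l1 l2 : ndistinct (l1 ++ l2) <= ndistinct l1 + ndistinct l2.
Proof.
  rewrite !nd_nodup. rewrite <- length_app. apply NoDup_incl_length. apply NoDup_nodup.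
  intros x Hx. apply nodup_In in Hx. apply in_app_or in Hx. apply in_or_app.
  destruct Hx; [left|right]; apply nodup_In; auto.
Qed.

Lemma nd_map {A} (f : A -> bseq) (l : list A) (g : bseq -> bseq) :
  ndistinct (map g (map f l)) <= ndistinct (map f l).
Proof.
  rewrite !nd_nodup. rewrite <- (length_map g (nodup deq (map f l))).
  apply NoDup_incl_length. apply NoDup_nodup.
  intros x Hx. apply nodup_In in Hx. apply in_map_iff in Hx. destruct Hx as [y [<- Hy]].
  apply in_map. apply nodup_In. auto.
Qed.

Lemma nd_map' (l : list bseq) (g : bseq -> bseq) :
  ndistinct (map g l) <= ndistinct l.
Proof.
  rewrite !nd_nodup. rewrite <- (length_map g (nodup deq l)).
  apply NoDup_incl_length. apply NoDup_nodup.
  intros x Hx. apply nodup_In in Hx. apply in_map_iff in Hx. destruct Hx as [y [<- Hy]].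
  apply in_map. apply nodup_In. auto.
Qed.

Lemma nd_pos l : l <> [] -> 1 <= ndistinct l.
Proof.
  intro H. destruct l as [|x l]. congruence.
  apply (nd_ge [x]). repeat constructor; auto. intros y [<-|[]]. left; auto.
Qed.

Definition Pt (N : list v4) : list bseq :=
  map (fun k => act_word rho (realize (skipn k N))) (seq 0 (S (length N))).
Definition D N := ndistinct (Pt N).

Lemma Pt_in N k : In (act_word rho (realize (skipn k N))) (Pt N).
Proof.
  unfold Pt. destruct (le_lt_dec k (length N)) as [H|H].
  - apply (in_map (fun k => act_word rho (realize (skipn k N)))). apply in_seq. lia.
  - rewrite skipn_all2 by lia. replace (@nil v4) with (skipn (length N) N) by (apply skipn_all).
    apply (in_map (fun k => act_word rho (realize (skipn k N)))). apply in_seq. lia.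
Qed.

Lemma D_le N : D N <= S (length N).
Proof. unfold D. etransitivity. apply nd_le_length. unfold Pt. rewrite length_map, length_seq. lia. Qed.

Lemma delta_le_D w : delta w <= D (nf w).
Proof.
  unfold delta, D. apply nd_incl. intros x Hx. unfold orbit_points in Hx.
  apply in_map_iff in Hx. destruct Hx as [i [<- _]].
  rewrite rho_nf. destruct (nf_skipn w i) as [k ->]. apply Pt_in.
Qed.

Lemma skipn_realize N k : exists j, skipn j (realize N) = realize (skipn k N).
Proof.
  exists (length (realize (firstn k N))).
  assert (H : realize N = realize (firstn k N) ++ realize (skipn k N)) by (rewrite <- realize_app, firstn_skipn; reflexivity).
  rewrite H, skipn_app, skipn_all, Nat.sub_diag. reflexivity.
Qed.

Lemma D_le_delta N : D N <= delta (realize N).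
Proof.
  unfold D, delta. apply nd_incl. intros x Hx. unfold Pt in Hx.
  apply in_map_iff in Hx. destruct Hx as [k [<- _]].
  destruct (skipn_realize N k) as [j Hj]. rewrite <- Hj.
  destruct (le_lt_dec j (length (realize N))) as [H|H].
  - unfold orbit_points. apply (in_map (fun i => act_word rho (skipn i (realize N)))). apply in_seq. lia.
  - rewrite skipn_all2 by lia. unfold orbit_points.
    replace (@nil letter) with (skipn (length (realize N)) (realize N)) by apply skipn_all.
    apply (in_map (fun i => act_word rho (skipn i (realize N)))). apply in_seq. lia.
Qed.

Lemma delta_pad p w : delta w <= delta (p ++ w).
Proof.
  unfold delta. apply nd_incl. intros x Hx. unfold orbit_points in *.
  apply in_map_iff in Hx. destruct Hx as [i [<- Hi]]. apply in_seq in Hi.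
  replace (skipn i w) with (skipn (length p + i) (p ++ w)).
  - apply (in_map (fun i => act_word rho (skipn i (p ++ w)))). apply in_seq. rewrite length_app. lia.
  - rewrite skipn_app. replace (skipn (length p + i) p) with (@nil letter) by (symmetry; apply skipn_all2; lia).
    simpl. f_equal. lia.
Qed.

Lemma delta_pos w : 1 <= delta w.
Proof. apply nd_pos. unfold orbit_points. simpl. discriminate. Qed.

Lemma par_realize N : par (realize N) = Nat.odd (length N).
Proof. unfold par. rewrite cntA_realize. reflexivity. Qed.

Lemma odd_split n k : k <= n -> Nat.odd n = xorb (Nat.odd k) (Nat.odd (n - k)).
Proof. intro H. rewrite <- Nat.odd_add. f_equal. lia. Qed.

Lemma realize_split N k : realize N = realize (firstn k N) ++ realize (skipn k N).
Proof. rewrite <- realize_app, firstn_skipn. reflexivity. Qed.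

Lemma tail_in_Pt L1 w2 : In (act_word rho w2) (Pt (nf (L1 ++ w2))).
Proof.
  rewrite rho_nf, <- (nf_app L1 w2). apply Pt_in.
Qed.

Lemma UB1 N : D N <= D (nf (sec true (realize N))) + D (nf (sec false (realize N))).
Proof.
  unfold D. etransitivity.
  - apply (nd_incl _ (map (consbit (negb (Nat.odd (length N)))) (Pt (nf (sec true (realize N)))) ++
                       map (consbit (negb (negb (Nat.odd (length N))))) (Pt (nf (sec false (realize N)))))).
    intros x Hx. unfold Pt at 1 in Hx. apply in_map_iff in Hx. destruct Hx as [k [<- Hk]].
    apply in_seq in Hk.
    rewrite point_rho, par_realize, length_skipn.
    pose proof (realize_split N k) as HS.
    assert (Hpk : par (realize (firstn k N)) = Nat.odd k).
    { rewrite par_realize, length_firstn. f_equal. lia. }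
    rewrite (odd_split (length N) k) by lia.
    destruct (Nat.odd k) eqn:Ek.
    + apply in_or_app. right. apply in_map_iff. eexists; split.
      2:{ rewrite HS, sec_app, Hpk. simpl. apply tail_in_Pt. }
      destruct (Nat.odd (length N - k)); reflexivity.
    + apply in_or_app. left. apply in_map_iff. eexists; split.
      2:{ rewrite HS, sec_app, Hpk. simpl. apply tail_in_Pt. }
      destruct (Nat.odd (length N - k)); reflexivity.
  - etransitivity. apply nd_app. apply Nat.add_le_mono; apply nd_map'.
Qed.

Lemma cnt_sec_bound N : 2 * cntA (sec true (realize N)) <= length N + 1 /\
                        2 * cntA (sec false (realize N)) <= length N.
Proof.
  induction N as [|v N IH]. simpl; lia.
  rewrite !sec_realize_cons, !cntA_app. simpl negb. simpl length.
  rewrite !sec_lett. destruct v; simpl; lia.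
Qed.

Definition flat2 (P : list (v4 * v4)) : list v4 := flat_map (fun '(x, y) => [x; y]) P.

Lemma flat2_app P1 P2 : flat2 (P1 ++ P2) = flat2 P1 ++ flat2 P2.
Proof. unfold flat2. apply flat_map_app. Qed.

Lemma flat2_len P : length (flat2 P) = 2 * length P.
Proof. induction P as [|[x y] P IH]; simpl; lia. Qed.

Lemma par_flat2 P : par (realize (flat2 P)) = false.
Proof.
  rewrite par_realize, flat2_len, Nat.odd_mul. reflexivity.
Qed.

Lemma secA_cons x y R : sec true (realize (flat2 ((x, y) :: R))) =
  sec false (lett x) ++ sec true (lett y) ++ sec true (realize (flat2 R)).
Proof.
  change (flat2 ((x, y) :: R)) with (x :: y :: flat2 R).
  rewrite sec_realize_cons, sec_realize_cons. simpl negb. rewrite app_assoc. reflexivity.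
Qed.

Lemma secB_cons x y R : sec false (realize (flat2 ((x, y) :: R))) =
  sec true (lett x) ++ sec false (lett y) ++ sec false (realize (flat2 R)).
Proof.
  change (flat2 ((x, y) :: R)) with (x :: y :: flat2 R).
  rewrite sec_realize_cons, sec_realize_cons. simpl negb. rewrite app_assoc. reflexivity.
Qed.

Lemma cnt_true_lett y : cntA (sec true (lett y)) = 0.
Proof. destruct y; reflexivity. Qed.
Lemma cnt_false_lett y : cntA (sec false (lett y)) <= 1.
Proof. destruct y; simpl; lia. Qed.

Lemma realA : forall P k, k <= cntA (sec true (realize (flat2 P))) ->
  exists P1 P2, P = P1 ++ P2 /\ cntA (sec true (realize (flat2 P1))) = k.
Proof.
  induction P as [|[x y] R IH]; intros k Hk.
  - exists [], []. simpl in *. split; auto; lia.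
  - destruct k as [|k]. { exists [], ((x, y) :: R). simpl. auto. }
    rewrite secA_cons, !cntA_app, cnt_true_lett in Hk.
    pose proof (cnt_false_lett x).
    destruct (IH (S k - cntA (sec false (lett x)))) as [P1 [P2 [HP Hc]]]. lia.
    exists ((x, y) :: P1), P2. split. rewrite HP; reflexivity.
    rewrite secA_cons, !cntA_app, cnt_true_lett, Hc. lia.
Qed.

Lemma realB : forall P k, k < cntA (sec false (realize (flat2 P))) ->
  exists P1 x y R, P = P1 ++ (x, y) :: R /\ cntA (sec false (realize (flat2 P1))) = k.
Proof.
  induction P as [|[x y] R IH]; intros k Hk.
  - simpl in Hk. lia.
  - destruct k as [|k]. { exists [], x, y, R. simpl. auto. }
    rewrite secB_cons, !cntA_app, cnt_true_lett in Hk.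
    pose proof (cnt_false_lett y).
    destruct (IH (S k - cntA (sec false (lett y)))) as [P1 [x' [y' [R' [HP Hc]]]]]. lia.
    exists ((x, y) :: P1), x', y', R'. split. rewrite HP; reflexivity.
    rewrite secB_cons, !cntA_app, cnt_true_lett, Hc. lia.
Qed.

Lemma Pt_in_app M1 M2 : In (act_word rho (realize M2)) (Pt (M1 ++ M2)).
Proof.
  pose proof (Pt_in (M1 ++ M2) (length M1)) as H.
  rewrite skipn_app, skipn_all, Nat.sub_diag in H. exact H.
Qed.

Lemma consbit_inj b x y : consbit b x = consbit b y -> x = y.
Proof.
  intro H. apply functional_extensionality; intro k.
  change (x k) with (consbit b x (S k)). rewrite H. reflexivity.
Qed.

Lemma skipn_app_le {A} (l1 l2 : list A) k : k <= length l1 -> skipn k (l1 ++ l2) = skipn k l1 ++ l2.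
Proof. intro H. rewrite skipn_app. replace (k - length l1) with 0 by lia. reflexivity. Qed.

Lemma LB P N Q1 Q2 :
  nf (sec true (realize (flat2 P))) = N ++ Q1 -> Q1 <> [] ->
  nf (sec false (realize (flat2 P))) = N ++ Q2 -> Q2 <> [] ->
  2 * D N <= D (flat2 P).
Proof.
  intros HA HQ1 HB HQ2.
  set (F1 := fun x => consbit true (act_word x (realize Q1))).
  set (F2 := fun x => consbit false (act_word x (realize Q2))).
  set (L := nodup deq (Pt N)).
  assert (HL : D N = length L) by (unfold D, L; apply nd_nodup).
  replace (2 * D N) with (length (map F1 L ++ map F2 L)) by (rewrite length_app, !length_map; lia).
  unfold D. apply nd_ge.
  - apply NoDup_app.
    + apply NoDup_map_NoDup_ForallPairs. intros a b _ _ H. unfold F1 in H.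
      apply consbit_inj, act_word_inj in H. exact H. apply NoDup_nodup.
    + apply NoDup_map_NoDup_ForallPairs. intros a b _ _ H. unfold F2 in H.
      apply consbit_inj, act_word_inj in H. exact H. apply NoDup_nodup.
    + intros a Ha Hb. apply in_map_iff in Ha, Hb. destruct Ha as [x [<- _]]. destruct Hb as [y [Hy _]].
      unfold F1, F2 in Hy. apply (f_equal (fun f => f 0)) in Hy. discriminate.
  - intros z Hz. apply in_app_or in Hz.
    destruct Hz as [Hz|Hz]; apply in_map_iff in Hz; destruct Hz as [x [<- Hx]];
      unfold L in Hx; apply nodup_In in Hx; unfold Pt in Hx; apply in_map_iff in Hx;
      destruct Hx as [k [<- Hk]]; apply in_seq in Hk.
    + assert (Hk' : k <= cntA (sec true (realize (flat2 P)))).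
      { rewrite <- nf_len, HA, length_app. lia. }
      destruct (realA P k Hk') as [P1 [P2 [HP Hc]]].
      rewrite HP, flat2_app. replace (F1 (act_word rho (realize (skipn k N)))) with
        (act_word rho (realize (flat2 P2))). apply Pt_in_app.
      rewrite point_rho, par_flat2. unfold F1. f_equal.
      rewrite rho_nf. rewrite HP, flat2_app, realize_app, sec_app, par_flat2 in HA. simpl in HA.
      rewrite <- (nf_app (sec true (realize (flat2 P1)))), HA, Hc, skipn_app_le by lia.
      rewrite realize_app, act_app. reflexivity.
    + assert (Hk' : k < cntA (sec false (realize (flat2 P)))).
      { rewrite <- nf_len, HB, length_app. destruct Q2; [congruence|simpl; lia]. }
      destruct (realB P k Hk') as [P1 [x' [y' [R [HP Hc]]]]].
      rewrite HP, flat2_app. change (flat2 ((x', y') :: R)) with ([x'] ++ y' :: flat2 R).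
      rewrite app_assoc.
      replace (F2 (act_word rho (realize (skipn k N)))) with
        (act_word rho (realize (y' :: flat2 R))). apply Pt_in_app.
      rewrite point_rho, par_realize. simpl length. rewrite flat2_len.
      replace (Nat.odd (S (2 * length R))) with true by (rewrite Nat.odd_succ, Nat.even_mul; reflexivity).
      unfold F2. f_equal.
      rewrite rho_nf. rewrite HP, flat2_app, realize_app, sec_app, par_flat2, xorb_false_l in HB.
      change (flat2 ((x', y') :: R)) with (x' :: y' :: flat2 R) in HB.
      rewrite sec_realize_cons in HB. simpl negb in HB. rewrite app_assoc in HB.
      rewrite <- (nf_app (sec false (realize (flat2 P1)) ++ sec true (lett x'))), HB.
      rewrite cntA_app, cnt_true_lett, Nat.add_0_r, Hc, skipn_app_le by lia.
      rewrite realize_app, act_app. reflexivity.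
Qed.

Definition hinv (v : v4) : v4 :=
  match v with Vc => Vb | Vd => Vc | Vb => Vd | Ve => Ve end.

Fixpoint th (o : bool) (G : v4) (S : list v4) : list (v4 * v4) :=
  match S with
  | [] => if o then [(Vb, Vb); (Vb, Vb)] else [(hinv G, Vb); (Vb, Vb); (Vb, Vb)]
  | s :: S' =>
    if o then
      match s with
      | Vb => (Vb, Vd) :: th false Vd S'
      | _ => (hinv s, hinv s) :: th true G S'
      end
    else
      match s with
      | Vb => (hinv G, Vb) :: (Vd, Vc) :: th true G S'
      | _ => (hinv G, hinv s) :: th false s S'
      end
  end.

Definition nonE (S : list v4) := Forall (fun v => v <> Ve) S.
Definition gd (G : v4) := G = Vc \/ G = Vd.

Definition Alit P := sec true (realize (flat2 P)).
Definition Blit P := sec false (realize (flat2 P)).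

Arguments realize : simpl never.
Arguments flat2 : simpl never.

Lemma thA : forall S o G, nonE S -> gd G ->
  exists Q, Q <> [] /\ nfp (Alit (th o G S)) = (Ve, S ++ Q).
Proof.
  induction S as [|s S IH]; intros o G HS HG.
  - destruct o; destruct HG as [->| ->]; simpl; eexists; split; try reflexivity; discriminate.
  - inversion HS as [|? ? Hs HS']; subst.
    destruct o; destruct s; try congruence; simpl th; unfold Alit; rewrite ?secA_cons.
    + destruct (IH false Vd HS' (or_intror eq_refl)) as [Q [HQ HA]]. exists Q; split; auto.
      unfold Alit in HA. simpl. rewrite HA. reflexivity.
    + destruct (IH true G HS' HG) as [Q [HQ HA]]. exists Q; split; auto.
      unfold Alit in HA. simpl. rewrite HA. reflexivity.
    + destruct (IH true G HS' HG) as [Q [HQ HA]]. exists Q; split; auto.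
      unfold Alit in HA. simpl. rewrite HA. reflexivity.
    + destruct (IH true G HS' HG) as [Q [HQ HA]]. exists Q; split; auto.
      unfold Alit in HA. destruct HG as [-> | ->]; simpl; rewrite HA; reflexivity.
    + destruct (IH false Vc HS' (or_introl eq_refl)) as [Q [HQ HA]]. exists Q; split; auto.
      unfold Alit in HA. destruct HG as [-> | ->]; simpl; rewrite HA; reflexivity.
    + destruct (IH false Vd HS' (or_intror eq_refl)) as [Q [HQ HA]]. exists Q; split; auto.
      unfold Alit in HA. destruct HG as [-> | ->]; simpl; rewrite HA; reflexivity.
Qed.

Definition QB := [Vc; Vc; Ve].

Lemma thB : forall S, nonE S ->
  (forall G, gd G -> nfp (Blit (th false G S)) = (G, S ++ QB)) /\
  (forall G, exists h T, nfp (Blit (th true G S)) = (h, T) /\ h :: T = S ++ QB).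
Proof.
  induction S as [|s S IH]; intros HS.
  - split.
    + intros G [-> | ->]; reflexivity.
    + intros G. exists Vc, [Vc; Ve]. split; reflexivity.
  - inversion HS as [|? ? Hs HS']; subst. destruct (IH HS') as [IH0 IH1]. split.
    + intros G HG. destruct s; try congruence; simpl th; unfold Blit; rewrite ?secB_cons.
      * destruct (IH1 G) as [h [T [E1 E2]]]. unfold Blit in E1.
        destruct HG as [-> | ->]; simpl; rewrite E1; simpl; rewrite E2; reflexivity.
      * specialize (IH0 Vc (or_introl eq_refl)). unfold Blit in IH0.
        destruct HG as [-> | ->]; simpl; rewrite IH0; reflexivity.
      * specialize (IH0 Vd (or_intror eq_refl)). unfold Blit in IH0.
        destruct HG as [-> | ->]; simpl; rewrite IH0; reflexivity.
    + intros G. destruct s; try congruence; simpl th; unfold Blit; rewrite ?secB_cons.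
      * specialize (IH0 Vd (or_intror eq_refl)). unfold Blit in IH0.
        exists Vb, (S ++ QB). simpl. rewrite IH0. split; reflexivity.
      * destruct (IH1 G) as [h [T [E1 E2]]]. unfold Blit in E1.
        exists Vc, (h :: T). simpl. rewrite E1. split. reflexivity. rewrite E2. reflexivity.
      * destruct (IH1 G) as [h [T [E1 E2]]]. unfold Blit in E1.
        exists Vd, (h :: T). simpl. rewrite E1. split. reflexivity. rewrite E2. reflexivity.
Qed.

Lemma nonE_th : forall S o G, nonE S -> G <> Ve -> nonE (flat2 (th o G S)).
Proof.
  unfold nonE. induction S as [|s S IH]; intros o G HS HG.
  - destruct o; unfold flat2; simpl; repeat constructor; try discriminate; destruct G; simpl; congruence.
  - inversion HS as [|? ? Hs HS']; subst.
    destruct o; destruct s; try congruence; simpl th; unfold flat2 in *; simpl;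
      repeat constructor; try discriminate; try (apply IH; auto; discriminate);
      destruct G; simpl; congruence.
Qed.

Lemma step_D N : nonE N -> 2 * D N <= D (flat2 (th false Vc N)).
Proof.
  intro HN.
  destruct (thA N false Vc HN (or_introl eq_refl)) as [Q1 [HQ1 HA]].
  destruct (thB N HN) as [HB _]. specialize (HB Vc (or_introl eq_refl)).
  apply (LB _ N Q1 QB).
  - unfold nf. unfold Alit in HA. rewrite HA. reflexivity.
  - exact HQ1.
  - unfold nf. unfold Blit in HB. rewrite HB. reflexivity.
  - discriminate.
Qed.

Open Scope R_scope.

Lemma ln_le_sub1 x : 0 < x -> ln x <= x - 1.
Proof. intro H. pose proof (exp_ineq1_le (ln x)). rewrite exp_ln in H0; lra. Qed.

Lemma exp_le_mono a b : a <= b -> exp a <= exp b.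
Proof. intro H. destruct (Rle_lt_or_eq_dec a b H) as [H'|H']. left; apply exp_increasing; auto. subst; lra. Qed.

Lemma ln_le_mono a b : 0 < a -> a <= b -> ln a <= ln b.
Proof. intros Ha H. destruct (Rle_lt_or_eq_dec a b H) as [H'|H']. left; apply ln_increasing; auto. subst; lra. Qed.

Lemma rp_concave a x : 0 < a < 1 -> 0 < x -> Rpower x a <= a * x + 1 - a.
Proof.
  intros Ha Hx. set (m := a * x + 1 - a).
  assert (Hm : 0 < m) by (unfold m; nra).
  assert (H1 := ln_le_sub1 (x / m) ltac:(apply Rdiv_lt_0_compat; lra)).
  assert (H2 := ln_le_sub1 (/ m) ltac:(apply Rinv_0_lt_compat; lra)).
  rewrite ln_Rinv in H2 by lra.
  unfold Rdiv in H1. rewrite ln_mult, ln_Rinv in H1 by (try apply Rinv_0_lt_compat; lra).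
  assert (H3 : a * ln x <= ln m).
  { assert (a * (x * / m - 1) + (1 - a) * (/ m - 1) = 0).
    { unfold m in *. field. lra. }
    nra. }
  unfold Rpower. rewrite <- (exp_ln m) by lra. apply exp_le_mono. lra.
Qed.

Lemma rp_pos x a : 0 < Rpower x a.
Proof. unfold Rpower. apply exp_pos. Qed.

Lemma rp_mid a x y : 0 < a < 1 -> 0 < x -> 0 < y ->
  Rpower x a + Rpower y a <= 2 * Rpower ((x + y) / 2) a.
Proof.
  intros Ha Hx Hy. set (m := (x + y) / 2). assert (Hm : 0 < m) by (unfold m; lra).
  assert (Ex : x = m * (x / m)) by (field; lra).
  assert (Ey : y = m * (y / m)) by (field; lra).
  rewrite Ex at 1. rewrite Ey at 1.
  rewrite <- !Rpower_mult_distr by (try apply Rdiv_lt_0_compat; lra).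
  pose proof (rp_concave a (x / m) Ha ltac:(apply Rdiv_lt_0_compat; lra)).
  pose proof (rp_concave a (y / m) Ha ltac:(apply Rdiv_lt_0_compat; lra)).
  pose proof (rp_pos m a).
  assert (Hs : x / m + y / m = 2) by (unfold m; field; lra).
  set (p := Rpower m a) in *.
  apply Rle_trans with (p * (a * (x / m) + 1 - a) + p * (a * (y / m) + 1 - a)).
  - apply Rplus_le_compat; apply Rmult_le_compat_l; lra.
  - replace (p * (a * (x / m) + 1 - a) + p * (a * (y / m) + 1 - a)) with (p * (a * (x / m + y / m) + 2 - 2 * a)) by ring.
    rewrite Hs. lra.
Qed.

Lemma rp_mono a x y : 0 <= a -> 0 < x -> x <= y -> Rpower x a <= Rpower y a.
Proof. intros. apply Rle_Rpower_l; lra. Qed.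

Lemma rp_one a : Rpower 1 a = 1.
Proof. unfold Rpower. rewrite ln_1, Rmult_0_r. apply exp_0. Qed.

Lemma eta_bounds eta : eta ^ 3 + eta ^ 2 + eta - 2 = 0 -> 0 < eta < 1.
Proof. intro H. split; nra. Qed.

Definition alpha eta := ln 2 / ln (2 / eta).

Lemma alpha_bounds eta : 0 < eta < 1 -> 0 < alpha eta < 1.
Proof.
  intro He. unfold alpha.
  assert (H2 : 2 < 2 / eta) by (apply (Rmult_lt_reg_r eta); [lra|]; field_simplify; nra).
  assert (Hl2 : 0 < ln 2) by (rewrite <- ln_1; apply ln_increasing; lra).
  assert (Hl : ln 2 < ln (2 / eta)) by (apply ln_increasing; lra).
  split. apply Rdiv_lt_0_compat; lra.
  apply (Rmult_lt_reg_r (ln (2 / eta))). lra. unfold Rdiv. rewrite Rmult_assoc, Rinv_l by lra. lra.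
Qed.

Lemma rp_half eta : 0 < eta < 1 -> Rpower (eta / 2) (alpha eta) = / 2.
Proof.
  intro He. unfold Rpower, alpha.
  assert (H2 : 2 < 2 / eta) by (apply (Rmult_lt_reg_r eta); [lra|]; field_simplify; nra).
  assert (Hl : 0 < ln (2 / eta)) by (rewrite <- ln_1; apply ln_increasing; lra).
  replace (eta / 2) with (/ (2 / eta)) by (field; lra).
  rewrite ln_Rinv by lra.
  replace (ln 2 / ln (2 / eta) * - ln (2 / eta)) with (- ln 2) by (field; lra).
  rewrite exp_Ropp, exp_ln by lra. reflexivity.
Qed.

Lemma rp_lambda eta : 0 < eta < 1 -> Rpower (2 / eta) (alpha eta) = 2.
Proof.
  intro He. unfold Rpower, alpha.
  assert (H2 : 2 < 2 / eta) by (apply (Rmult_lt_reg_r eta); [lra|]; field_simplify; nra).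
  assert (Hl : 0 < ln (2 / eta)) by (rewrite <- ln_1; apply ln_increasing; lra).
  replace (ln 2 / ln (2 / eta) * ln (2 / eta)) with (ln 2) by (field; lra).
  apply exp_ln; lra.
Qed.

Lemma rp_scale eta x : 0 < eta < 1 -> 0 < x -> 2 * Rpower (eta * x / 2) (alpha eta) = Rpower x (alpha eta).
Proof.
  intros He Hx. replace (eta * x / 2) with ((eta / 2) * x) by field.
  rewrite <- Rpower_mult_distr by lra. rewrite rp_half by auto. field.
Qed.

Lemma rp_eta_lt1 eta : 0 < eta < 1 -> Rpower eta (alpha eta) < 1.
Proof.
  intro He. rewrite <- (rp_one (alpha eta)). apply Rlt_Rpower_l. apply alpha_bounds; auto. lra.
Qed.

Lemma rp_inv a T : 0 < a -> 0 < T -> Rpower (Rpower T (/ a)) a = T.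
Proof. intros. rewrite Rpower_mult. rewrite Rinv_l by lra. apply Rpower_1; auto. Qed.

Lemma rp_pow_lambda eta k : 0 < eta < 1 -> Rpower ((2 / eta) ^ k) (alpha eta) = 2 ^ k.
Proof.
  intro He. assert (H2 : 0 < 2 / eta) by (apply Rdiv_lt_0_compat; lra).
  induction k as [|k IH]. simpl. apply rp_one.
  simpl. rewrite <- Rpower_mult_distr by (try apply pow_lt; lra). rewrite IH, rp_lambda; auto.
Qed.

Definition wA eta := 1 - eta ^ 3.
Definition w4 eta (v : v4) : R :=
  match v with Ve => 0 | Vb => eta ^ 3 | Vc => 1 - eta ^ 2 | Vd => 1 - eta end.
Definition wl eta (g : letter) : R :=
  match g with La => wA eta | Lb => eta ^ 3 | Lc => 1 - eta ^ 2 | Ld => 1 - eta end.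
Definition mu eta (N : list v4) : R := fold_right (fun v acc => wA eta + w4 eta v + acc) 0 N.
Definition mul_ eta (L : list letter) : R := fold_right (fun g acc => wl eta g + acc) 0 L.

Lemma mul_app eta L1 L2 : mul_ eta (L1 ++ L2) = mul_ eta L1 + mul_ eta L2.
Proof. induction L1; simpl; [ring| rewrite IHL1; ring]. Qed.


Lemma w4_nonneg eta v : 0 < eta < 1 -> 0 <= w4 eta v.
Proof. intro He. destruct v; simpl; nra. Qed.

Lemma wA_pos eta : 0 < eta < 1 -> 0 < wA eta.
Proof. intro He. unfold wA. nra. Qed.

Lemma w4_tri eta x y : 0 < eta < 1 -> eta ^ 3 + eta ^ 2 + eta - 2 = 0 ->
  w4 eta (vmul x y) <= w4 eta x + w4 eta y.
Proof. intros He Hc. destruct x, y; simpl; nra. Qed.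

Lemma mu_nfp eta L : 0 < eta < 1 -> eta ^ 3 + eta ^ 2 + eta - 2 = 0 ->
  w4 eta (fst (nfp L)) + mu eta (snd (nfp L)) <= mul_ eta L.
Proof.
  intros He Hc. induction L as [|g L IH]; simpl. lra.
  destruct (nfp L) as [v N]. simpl in IH.
  destruct g; simpl.
  - lra.
  - pose proof (w4_tri eta Vb v He Hc). simpl in H. lra.
  - pose proof (w4_tri eta Vc v He Hc). simpl in H. lra.
  - pose proof (w4_tri eta Vd v He Hc). simpl in H. lra.
Qed.

Lemma mu_nf eta L : 0 < eta < 1 -> eta ^ 3 + eta ^ 2 + eta - 2 = 0 ->
  mu eta (nf L) <= mul_ eta L.
Proof.
  intros He Hc. pose proof (mu_nfp eta L He Hc). pose proof (w4_nonneg eta (fst (nfp L)) He).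
  unfold nf. lra.
Qed.

Lemma mu_sec eta N : 0 < eta < 1 -> eta ^ 3 + eta ^ 2 + eta - 2 = 0 ->
  mul_ eta (sec true (realize N)) + mul_ eta (sec false (realize N)) <= eta * mu eta N.
Proof.
  intros He Hc. induction N as [|v N IH].
  - simpl. lra.
  - rewrite !sec_realize_cons, !mul_app. simpl negb.
    replace (mu eta (v :: N)) with (wA eta + w4 eta v + mu eta N) by reflexivity.
    rewrite !sec_lett.
    set (X := mul_ eta (sec false (realize N))) in *. set (Y := mul_ eta (sec true (realize N))) in *.
    set (M := mu eta N) in *.
    destruct v; simpl; unfold wA in *; nra.
Qed.

Lemma mu_len eta N : 0 < eta < 1 -> wA eta * INR (length N) <= mu eta N.
Proof.
  intro He. induction N as [|v N IH]. simpl. lra.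
  pose proof (w4_nonneg eta v He). change (length (v :: N)) with (S (length N)). rewrite S_INR.
  change (mu eta (v :: N)) with (wA eta + w4 eta v + mu eta N). lra.
Qed.

Lemma mu_nonneg eta N : 0 < eta < 1 -> 0 <= mu eta N.
Proof.
  intro He. pose proof (mu_len eta N He). pose proof (wA_pos eta He). pose proof (pos_INR (length N)). nra.
Qed.

Lemma mul_len eta L : 0 < eta < 1 -> mul_ eta L <= INR (length L).
Proof.
  intro He. induction L as [|g L IH]. simpl. lra.
  change (length (g :: L)) with (S (length L)). rewrite S_INR.
  change (mul_ eta (g :: L)) with (wl eta g + mul_ eta L).
  destruct g; simpl; unfold wA; nra.
Qed.

Lemma D_two N : (length N <= 1)%nat -> INR (D N) <= 2.
Proof.
  intro H. pose proof (D_le N). apply le_INR in H0. rewrite S_INR in H0. apply le_INR in H. simpl in H. lra.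
Qed.

Lemma UB_core eta : 0 < eta < 1 -> eta ^ 3 + eta ^ 2 + eta - 2 = 0 ->
  exists C1, 0 < C1 /\ forall N, INR (D N) <= C1 * Rmax 1 (Rpower (mu eta N) (alpha eta)).
Proof.
  intros He Hc.
  pose proof (alpha_bounds eta He) as Ha.
  set (a := alpha eta) in *.
  set (se := Rpower eta a).
  set (sA := Rpower (wA eta) a).
  assert (Hse : se < 1) by apply rp_eta_lt1, He.
  assert (HsA : 0 < sA) by apply rp_pos.
  assert (Hse0 : 0 < se) by apply rp_pos.
  set (T := sA + 2 + / (1 - se)).
  assert (HT1 : 0 < / (1 - se)) by (apply Rinv_0_lt_compat; lra).
  assert (HT : 0 < T) by (unfold T; lra).
  set (mu0 := Rpower T (/ a)).
  assert (Hmu0 : 0 < mu0) by apply rp_pos.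
  assert (HsT : Rpower mu0 a = T) by (apply rp_inv; lra).
  pose proof (wA_pos eta He) as HwA.
  set (B0 := mu0 / wA eta + 1).
  assert (HB0 : 0 < B0) by (unfold B0; apply Rplus_lt_0_compat; [apply Rdiv_lt_0_compat|]; lra).
  set (K := B0 + 1).
  assert (Hsmall : forall N, mu eta N < mu0 -> INR (D N) <= B0).
  { intros N HN. pose proof (D_le N) as H. apply le_INR in H. rewrite S_INR in H.
    pose proof (mu_len eta N He).
    assert (INR (length N) <= mu0 / wA eta).
    { apply (Rmult_le_reg_l (wA eta)); auto. replace (wA eta * (mu0 / wA eta)) with mu0 by (field; lra). lra. }
    unfold B0. lra. }
  assert (Hbig : forall m, mu0 <= m -> T <= Rpower m a).
  { intros m Hm. rewrite <- HsT. apply rp_mono; lra. }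
  assert (Main : forall n N, (length N <= n)%nat -> mu0 <= mu eta N ->
            INR (D N) <= K * (Rpower (mu eta N) a - sA)).
  { induction n as [|n IH]; intros N HN Hm.
    - pose proof (D_two N ltac:(lia)). pose proof (Hbig _ Hm). unfold K, T in *. nra.
    - destruct (le_lt_dec (length N) 1) as [H1|H1].
      { pose proof (D_two N H1). pose proof (Hbig _ Hm). unfold K, T in *. nra. }
      set (NA := nf (sec true (realize N))). set (NB := nf (sec false (realize N))).
      pose proof (cnt_sec_bound N) as [CA CB].
      assert (LA : (length NA <= n)%nat) by (unfold NA; rewrite nf_len; lia).
      assert (LB : (length NB <= n)%nat) by (unfold NB; rewrite nf_len; lia).
      assert (HU : (D N <= D NA + D NB)%nat) by apply UB1. apply le_INR in HU. rewrite plus_INR in HU.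
      assert (Hmu : mu eta NA + mu eta NB <= eta * mu eta N).
      { pose proof (mu_sec eta N He Hc). pose proof (mu_nf eta (sec true (realize N)) He Hc).
        pose proof (mu_nf eta (sec false (realize N)) He Hc). unfold NA, NB. lra. }
      pose proof (mu_nonneg eta NA He). pose proof (mu_nonneg eta NB He).
      set (m := mu eta N) in *. set (ma := mu eta NA) in *. set (mb := mu eta NB) in *.
      assert (Hsm : T <= Rpower m a) by (apply Hbig; auto).
      assert (Hmpos : 0 < m) by lra.
      assert (Hseta : Rpower (eta * m) a = se * Rpower m a)
        by (unfold se; symmetry; apply Rpower_mult_distr; [lra | exact Hmpos]).
      destruct (Rlt_dec ma mu0) as [Ha'|Ha']; destruct (Rlt_dec mb mu0) as [Hb'|Hb'].
      + pose proof (Hsmall NA Ha'). pose proof (Hsmall NB Hb'). unfold K, T in *. nra.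
      + pose proof (Hsmall NA Ha'). pose proof (IH NB LB ltac:(unfold mb in *; lra)) as HIB. change (mu eta NB) with mb in HIB.
        assert (Rpower mb a <= se * Rpower m a) by (rewrite <- Hseta; apply rp_mono; lra).
        assert (1 <= (1 - se) * Rpower m a).
        { apply Rle_trans with ((1 - se) * T). unfold T.
          assert ((1 - se) * / (1 - se) = 1) by (field; lra). nra. nra. }
        unfold K in *. nra.
      + pose proof (Hsmall NB Hb'). pose proof (IH NA LA ltac:(unfold ma in *; lra)) as HIA. change (mu eta NA) with ma in HIA.
        assert (Rpower ma a <= se * Rpower m a) by (rewrite <- Hseta; apply rp_mono; lra).
        assert (1 <= (1 - se) * Rpower m a).
        { apply Rle_trans with ((1 - se) * T). unfold T.
          assert ((1 - se) * / (1 - se) = 1) by (field; lra). nra. nra. }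
        unfold K in *. nra.
      + pose proof (IH NA LA ltac:(unfold ma in *; lra)) as HIA. change (mu eta NA) with ma in HIA. pose proof (IH NB LB ltac:(unfold mb in *; lra)) as HIB. change (mu eta NB) with mb in HIB.
        pose proof (rp_mid a ma mb Ha ltac:(lra) ltac:(lra)).
        assert (Rpower ((ma + mb) / 2) a <= Rpower (eta * m / 2) a) by (apply rp_mono; lra).
        pose proof (rp_scale eta m He Hmpos) as Hsc. fold a in Hsc.
        unfold K in *. nra. }
  exists (B0 + K). split. unfold K; lra.
  intro N. assert (HR1 := Rmax_l 1 (Rpower (mu eta N) a)). assert (HR2 := Rmax_r 1 (Rpower (mu eta N) a)).
  destruct (Rlt_dec (mu eta N) mu0) as [Hs|Hl].
  - pose proof (Hsmall N Hs). unfold K in *. nra.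
  - pose proof (Main (length N) N (le_n _) ltac:(lra)). unfold K in *. nra.
Qed.

Definition nu eta (v : v4) : R :=
  match v with Ve => 0 | Vb => 1 | Vc => eta | Vd => eta ^ 2 end.
Definition nuL eta (N : list v4) : R := fold_right (fun v acc => nu eta v + acc) 0 N.

Lemma nuL_cons2 eta x y R : nuL eta (flat2 ((x, y) :: R)) = nu eta x + nu eta y + nuL eta (flat2 R).
Proof. unfold flat2. simpl. ring. Qed.

Lemma th_nu eta : 0 < eta < 1 -> eta ^ 3 + eta ^ 2 + eta - 2 = 0 ->
  forall S o G, nonE S -> gd G ->
  nuL eta (flat2 (th o G S)) <= (2 / eta) * nuL eta S + (if o then 0 else nu eta (hinv G)) + 5.
Proof.
  intros He Hc.
  assert (L1 : (2 / eta) * eta = 2) by (field; lra).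
  assert (L2 : 2 / eta = 1 + eta + eta ^ 2).
  { apply (Rmult_eq_reg_r eta). rewrite L1. nra. lra. }
  induction S as [|s S IH]; intros o G HS HG.
  - destruct o; destruct HG as [-> | ->]; unfold flat2; simpl; nra.
  - inversion HS as [|? ? Hs HS']; subst.
    change (nuL eta (s :: S)) with (nu eta s + nuL eta S).
    destruct o; destruct s; try congruence; simpl th; rewrite ?nuL_cons2.
    + pose proof (IH false Vd HS' (or_intror eq_refl)). simpl in *. nra.
    + pose proof (IH true G HS' HG). simpl in *. nra.
    + pose proof (IH true G HS' HG). simpl in *. nra.
    + pose proof (IH true G HS' HG). destruct HG as [-> | ->]; simpl in *; nra.
    + pose proof (IH false Vc HS' (or_introl eq_refl)). destruct HG as [-> | ->]; simpl in *; nra.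
    + pose proof (IH false Vd HS' (or_intror eq_refl)). destruct HG as [-> | ->]; simpl in *; nra.
Qed.

Fixpoint fam (k : nat) : list v4 :=
  match k with O => [] | S k => flat2 (th false Vc (fam k)) end.

Lemma fam_nonE k : nonE (fam k).
Proof.
  induction k as [|k IH]; simpl. constructor. apply nonE_th; auto. discriminate.
Qed.

Lemma fam_D k : (2 ^ k <= D (fam k))%nat.
Proof.
  induction k as [|k IH]. simpl. unfold D. apply nd_pos. unfold Pt. simpl. discriminate.
  simpl fam. pose proof (step_D (fam k) (fam_nonE k)). simpl. lia.
Qed.

Lemma fam_nu eta : 0 < eta < 1 -> eta ^ 3 + eta ^ 2 + eta - 2 = 0 ->
  forall k, nuL eta (fam k) + 6 <= 12 * (2 / eta) ^ k.
Proof.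
  intros He Hc.
  assert (H2 : 2 < 2 / eta) by (apply (Rmult_lt_reg_r eta); [lra|]; field_simplify; nra).
  induction k as [|k IH]. simpl. lra.
  simpl fam. pose proof (th_nu eta He Hc (fam k) false Vc (fam_nonE k) (or_introl eq_refl)).
  change (nu eta (hinv Vc)) with 1 in H.
  replace ((2 / eta) ^ S k) with ((2 / eta) * (2 / eta) ^ k) by reflexivity.
  assert (H3 := Rmult_le_compat_l (2 / eta) _ _ ltac:(lra) IH).
  lra.
Qed.

Lemma nuL_len eta N : 0 < eta < 1 -> nonE N -> eta ^ 2 * INR (length N) <= nuL eta N.
Proof.
  intros He HN. induction N as [|v N IH]. simpl. lra.
  inversion HN as [|? ? Hv HN']; subst.
  change (length (v :: N)) with (S (length N)). rewrite S_INR.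
  change (nuL eta (v :: N)) with (nu eta v + nuL eta N).
  specialize (IH HN'). destruct v; simpl; try congruence; nra.
Qed.

Lemma len_realize N : nonE N -> length (realize N) = (2 * length N)%nat.
Proof.
  intro HN. induction N as [|v N IH]. reflexivity.
  inversion HN as [|? ? Hv HN']; subst. specialize (IH HN').
  rewrite realize_cons. change (length (La :: lett v ++ realize N)) with (S (length (lett v ++ realize N))).
  rewrite length_app, IH. change (length (v :: N)) with (S (length N)). destruct v; simpl; try congruence; lia.
Qed.

Lemma fam_len eta : 0 < eta < 1 -> eta ^ 3 + eta ^ 2 + eta - 2 = 0 ->
  forall k, INR (length (realize (fam k))) <= (24 / eta ^ 2) * (2 / eta) ^ k.
Proof.
  intros He Hc k. rewrite (len_realize _ (fam_nonE k)), mult_INR. simpl (INR 2).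
  pose proof (nuL_len eta (fam k) He (fam_nonE k)). pose proof (fam_nu eta He Hc k).
  assert (He2 : 0 < eta ^ 2) by nra.
  apply (Rmult_le_reg_l (eta ^ 2)); auto.
  replace (eta ^ 2 * (24 / eta ^ 2 * (2 / eta) ^ k)) with (24 * (2 / eta) ^ k) by (field; lra).
  lra.
Qed.

Lemma INR_lt_2pow n : INR n < 2 ^ n.
Proof.
  induction n as [|n IH]. simpl. lra.
  rewrite S_INR. replace (2 ^ S n) with (2 * 2 ^ n) by reflexivity.
  assert (1 <= 2 ^ n) by (apply pow_R1_Rle; lra). lra.
Qed.

Lemma ln_0' : ln 0 = 0.
Proof. unfold ln. destruct (Rlt_dec 0 0) as [r|r]; [exfalso; apply (Rlt_irrefl 0 r) | reflexivity]. Qed.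

Lemma rp_le_l a x l : 0 <= a -> 0 <= x -> x <= l -> 1 <= l -> Rmax 1 (Rpower x a) <= Rpower l a.
Proof.
  intros Ha Hx Hxl Hl. assert (H1 : 1 <= Rpower l a) by (rewrite <- (rp_one a); apply rp_mono; lra).
  apply Rmax_lub; auto.
  destruct (Rle_lt_or_eq_dec 0 x Hx) as [H|H].
  - apply rp_mono; lra.
  - subst. unfold Rpower. rewrite ln_0', Rmult_0_r, exp_0. exact H1.
Qed.

Theorem corollary4p8 (eta : R)
  (Heta : eta ^ 3 + eta ^ 2 + eta - 2 = 0) :
  exists C1 C2 : R, 0 < C1 /\ 0 < C2 /\
    forall l : nat, (0 < l)%nat ->
      (forall w : list letter, length w = l ->
         INR (delta w) <= C1 * Rpower (INR l) (ln 2 / ln (2 / eta))) /\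
      (exists w : list letter, length w = l /\
         C2 * Rpower (INR l) (ln 2 / ln (2 / eta)) <= INR (delta w)).
Proof.
  pose proof (eta_bounds eta Heta) as He.
  pose proof (alpha_bounds eta He) as Ha.
  change (ln 2 / ln (2 / eta)) with (alpha eta).
  set (a := alpha eta) in *.
  destruct (UB_core eta He Heta) as [C1 [HC1 HU]].
  set (Cw := 24 / eta ^ 2).
  assert (He2 : 0 < eta ^ 2) by nra.
  assert (HCw : 24 < Cw) by (unfold Cw; apply (Rmult_lt_reg_r (eta ^ 2)); [lra|]; field_simplify; nra).
  set (lam := 2 / eta).
  assert (Hlam : 2 < lam) by (unfold lam; apply (Rmult_lt_reg_r eta); [lra|]; field_simplify; nra).
  set (sC := Rpower Cw a).
  assert (HsC : 0 < sC) by apply rp_pos.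
  exists C1, (/ (2 * sC)). split; auto. split. apply Rinv_0_lt_compat; lra.
  intros l Hl.
  assert (Hl1 : 1 <= INR l) by (apply (le_INR 1); lia).
  split.
  - intros w Hw. apply Rle_trans with (INR (D (nf w))).
    + apply le_INR, delta_le_D.
    + eapply Rle_trans. apply HU. apply Rmult_le_compat_l. lra.
      apply rp_le_l; try lra. apply mu_nonneg; auto.
      eapply Rle_trans. apply mu_nf; auto. rewrite <- Hw. apply mul_len; auto.
  - assert (Q : forall k l, (1 <= l)%nat -> INR l < Cw * lam ^ k ->
       exists w, length w = l /\ Rpower (INR l) a <= 2 * sC * INR (delta w)).
    { induction k as [|k IH]; intros m Hm1 Hm.
      - exists (repeat La m). split. apply repeat_length.
        pose proof (delta_pos (repeat La m)) as Hd. apply le_INR in Hd. simpl in Hd.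
        assert (Rpower (INR m) a <= sC).
        { apply (le_INR 1) in Hm1. simpl in Hm1. simpl in Hm. apply rp_mono; lra. }
        nra.
      - destruct (Rlt_le_dec (INR m) (Cw * lam ^ k)) as [Hlt|Hge]. apply IH; auto.
        set (w0 := realize (fam k)).
        assert (Hw0 : (length w0 <= m)%nat).
        { apply INR_le. eapply Rle_trans. apply (fam_len eta He Heta). change (24 / eta ^ 2) with Cw. change (2 / eta) with lam. lra. }
        exists (repeat La (m - length w0) ++ w0). split.
        + rewrite length_app, repeat_length. lia.
        + assert (Hd : (2 ^ k <= delta (repeat La (m - length w0) ++ w0))%nat).
          { eapply Nat.le_trans. apply fam_D. eapply Nat.le_trans. apply D_le_delta. apply delta_pad. }
          apply le_INR in Hd. rewrite pow_INR in Hd. simpl (INR 2) in Hd.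
          assert (Hs : Rpower (INR m) a <= Rpower (Cw * lam ^ S k) a).
          { apply (le_INR 1) in Hm1. simpl in Hm1. apply rp_mono; lra. }
          rewrite <- Rpower_mult_distr in Hs by (try apply pow_lt; lra).
          fold sC in Hs. unfold lam in Hs. rewrite rp_pow_lambda in Hs by auto.
          simpl pow in Hs. replace (1 + 1) with 2 in Hd by ring.
          apply Rle_trans with (sC * (2 * 2 ^ k)); auto.
          assert (H3 := Rmult_le_compat_l (2 * sC) _ _ ltac:(lra) Hd). lra. }
    destruct (Q l l ltac:(lia)) as [w [Hw Hq]].
    + apply Rlt_le_trans with (2 ^ l). apply INR_lt_2pow.
      apply Rle_trans with (lam ^ l). apply pow_incr; lra.
      assert (0 < lam ^ l) by (apply pow_lt; lra). nra.
    + exists w. split; auto.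
      apply (Rmult_le_reg_l (2 * sC)). lra.
      rewrite <- Rmult_assoc, Rinv_r, Rmult_1_l by lra. exact Hq.
Qed.
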